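(* Let $W\subset\mathbb{P}^n$ be a smooth nondegenerate rational normal surface scroll of minimal degree $n-1$ (a ruled surface over $\mathbb{P}^1$ whose rulings are lines), and let $Y\subset W$ be a rational normal curve of degree $k$ with $2\le k\le n-1$. If there exists a linear subspace $\mathbb{P}^k\subset\mathbb{P}^n$ with $Y\subset W\cap\mathbb{P}^k$, then $Y=W\cap\mathbb{P}^k$ (set-theoretically). *)

(* Defs.v *)
(* Projective space P^n over an algebraically closed field K
   of characteristic 0 is modelled by nonzero row vectors in 'rV[K]_(n.+1);
   a projective subset is a predicate on vectors that is a cone (stable under
   nonzero scaling) not containing 0. *)
From mathcomp Require Import all_boot all_order all_algebra.
Set Implicit Arguments. Unset Strict Implicit. Unset Printing Implicit Defensive.
Import GRing.Theory.
Local Open Scope ring_scope.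

Section Defs.
Variable K : closedFieldType.

Definition std_scroll (a b : nat) (v : 'rV[K]_(a.+1 + b.+1)) : Prop :=
  exists s t lam mu : K, (s, t) != (0, 0) /\ (lam, mu) != (0, 0) /\
    v = row_mx (\row_(i < a.+1) (lam * s ^+ (a - i) * t ^+ i))
               (\row_(j < b.+1) (mu * s ^+ (b - j) * t ^+ j)).

Definition smooth_rn_surface_scroll (n : nat) (W : 'rV[K]_(n.+1) -> Prop) : Prop :=
  exists (a b : nat) (e : a.+1 + b.+1 = n.+1) (g : 'M[K]_(n.+1)),
    [/\ (1 <= a)%N, (1 <= b)%N, g \in unitmx &
      forall v, W v <-> exists w, std_scroll w /\ v = castmx (erefl 1%N, e) w *m g].

(* Y is a rational normal curve of degree k in P^n: the image of P^1 under
   [s:t] |-> [s^k : s^(k-1) t : ... : t^k] followed by an injective linear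
   map K^(k+1) -> K^(n+1) (so Y spans a P^k and is a standard RNC there). *)
Definition rational_normal_curve (n k : nat) (Y : 'rV[K]_(n.+1) -> Prop) : Prop :=
  exists M : 'M[K]_(k.+1, n.+1), row_free M /\
    forall v, Y v <-> exists c s t : K, [/\ c != 0, (s, t) != (0, 0) &
      v = c *: ((\row_(i < k.+1) (s ^+ (k - i) * t ^+ i)) *m M)].

Definition lin_span_pts (n m : nat) (A : 'M[K]_(m, n.+1)) (v : 'rV[K]_(n.+1)) : Prop :=
  (v <= A)%MS.

End Defs.

(* Main.v *)
Require Import Defs.
From mathcomp Require Import all_boot all_order all_algebra.
From mathcomp Require Import ring zify.
Set Implicit Arguments. Unset Strict Implicit. Unset Printing Implicit Defensive.
Import GRing.Theory.
Local Open Scope ring_scope.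


Lemma poly_zero_all (K : closedFieldType) (P : {poly K}) :
  (forall x, P.[x] = 0) -> P = 0.
Proof.
move=> HP; apply/eqP; apply/negPn/negP => P0.
have : size (P * 'X + 1) != 1.
  rewrite size_polyDl size_mulX // ?size_poly1 ?eqSS ?ltnS ?lt0n ?size_poly_eq0 //.
case/closed_rootP => x; rewrite /root !hornerE HP mul0r add0r.
by rewrite oner_eq0.
Qed.

Lemma rel2 (K : closedFieldType) (u v P Q : {poly K}) :
  (forall x, exists s t : K, (s, t) != (0, 0) /\ t * u.[x] = s * v.[x]
      /\ t * P.[x] = s * Q.[x]) -> P * v = Q * u.
Proof.
move=> H; apply/eqP; rewrite -subr_eq0; apply/eqP; apply: poly_zero_all => x.
have [s [t [st [H1 H2]]]] := H x.
rewrite !hornerE.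
have E1 : s * (P.[x] * v.[x] - Q.[x] * u.[x]) = 0.
  transitivity (P.[x] * (s*v.[x]) - (s*Q.[x]) * u.[x]); first ring.
  by rewrite -H1 -H2; ring.
have E2 : t * (P.[x] * v.[x] - Q.[x] * u.[x]) = 0.
  transitivity ((t*P.[x]) * v.[x] - Q.[x] * (t*u.[x])); first ring.
  by rewrite H1 H2; ring.
case: (eqVneq s 0) => [s0|s0]; last by move/eqP: E1; rewrite mulf_eq0 (negPf s0) => /eqP.
case: (eqVneq t 0) => [t0|t0]; last by move/eqP: E2; rewrite mulf_eq0 (negPf t0) => /eqP.
by move: st; rewrite s0 t0 eqxx.
Qed.

Lemma chain (K : fieldType) (z : nat -> {poly K}) (p q : {poly K}) (N : nat) :
  coprimep q p -> q != 0 -> (forall i, (i < N)%N -> z i * p = z i.+1 * q) ->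
  exists c, forall i, (i <= N)%N -> z i = c * q ^+ (N - i) * p ^+ i.
Proof.
move=> cop q0 H.
have S1 : forall i, (i <= N)%N -> z i * q ^+ i = z 0%N * p ^+ i.
  elim=> [|i IH] iN; first by rewrite !expr0 !mulr1.
  rewrite exprS mulrA -H // mulrAC IH ?(ltnW iN) // -mulrA -exprSr.
  by [].
have : q ^+ N %| z 0%N * p ^+ N.
  by rewrite -S1 // dvdp_mull.
rewrite Gauss_dvdpl; last by apply: coprimep_expl; apply: coprimep_expr.
case/dvdpP => c Hc; exists c => i iN.
apply: (@mulIf _ (q ^+ i)); first by rewrite expf_neq0.
rewrite S1 // Hc -!mulrA; congr (_ * _).
by rewrite mulrCA -exprD subnK // mulrC.
Qed.

Lemma gauss2 (K : fieldType) (c c' U V : {poly K}) :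
  coprimep c c' -> c * U = c' * V -> exists E, U = c' * E /\ V = c * E.
Proof.
move=> cop H.
case: (eqVneq c 0) => [c0|c0].
  have c'0 : c' != 0.
    by apply/eqP => c'0; move: cop; rewrite c0 c'0 coprime0p eqp01.
  have : c' %| c * U by rewrite H dvdp_mulr.
  rewrite Gauss_dvdpr; last by rewrite coprimep_sym.
  case/dvdpP => E HE.
  exists E; split; first by rewrite HE mulrC.
  apply: (@mulfI _ c') => //; rewrite -H HE c0; ring.
have : c %| c' * V by rewrite -H dvdp_mulr.
rewrite Gauss_dvdpr //; case/dvdpP => E HE.
exists E; split; last by rewrite HE mulrC.
apply: (@mulfI _ c) => //; rewrite H HE; ring.
Qed.

Lemma poly_split0 (K : fieldType) (E : {poly K}) :
  E = (E`_0)%:P + (\poly_(i < size E) E`_i.+1) * 'X.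
Proof.
apply/polyP => i; rewrite coefD coefC coefMX coef_poly.
case: i => [|i] /=; first by rewrite addr0.
rewrite add0r; case: ltnP => // H.
by rewrite nth_default // leqW.
Qed.

Lemma descent (K : fieldType) (c c' : {poly K}) (a b k : nat) :
  (k <= a + b)%N -> coprimep c c' -> (size c <= k - a + 1)%N ->
  (size c' <= k - b + 1)%N ->
  (forall f : {poly K}, (size f <= k.+1)%N -> exists A B : {poly K}, [/\ (size A <= a.+1)%N,
      (size B <= b.+1)%N & f = c * A + c' * B]) ->
  forall f : {poly K}, (size f <= k)%N -> exists A B : {poly K}, [/\ (size A <= a)%N,
      (size B <= b)%N & f = c * A + c' * B].
Proof.
move=> kab cop sc sc' H f sf.
have [A [B [sA sB fE]]] := H f (leq_trans sf (leqnSn _)).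
have sfX : (size (f * 'X)%R <= k.+1)%N.
  apply: leq_trans (size_polyMleq _ _) _; rewrite size_polyX addn2 /=.
  by [].
have [A' [B' [sA' sB' fXE]]] := H _ sfX.
have eq1 : c * (A * 'X - A') = c' * (B' - B * 'X).
  apply/eqP; rewrite -subr_eq0; apply/eqP.
  transitivity ((c * A + c' * B) * 'X - (c * A' + c' * B')); first ring.
  by rewrite -fE -fXE subrr.
have [E [E1 E2]] := gauss2 cop eq1.
set E0 := E`_0; set E1' := \poly_(i < size E) E`_i.+1.
have Esp := poly_split0 E; rewrite -/E0 -/E1' in Esp.
exists (A - c' * E1'), (B + c * E1'); split.
- have HG : (A - c' * E1') * 'X = A' + c' * E0%:P.
    have : A * 'X - A' = c' * (E0%:P + E1' * 'X) by rewrite -Esp.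
    move=> HH; apply/eqP; rewrite -subr_eq0; apply/eqP.
    transitivity ((A * 'X - A') - c' * (E0%:P + E1' * 'X)); first ring.
    by rewrite HH subrr.
  case: (eqVneq (A - c' * E1') 0) => [->|G0]; first by rewrite size_poly0.
  have : (size ((A - c' * E1') * 'X)%R <= a.+1)%N.
    rewrite HG; apply: leq_trans (size_polyD _ _) _; rewrite geq_max sA' /=.
    apply: leq_trans (size_polyMleq _ _) _; rewrite size_polyC.
    case: (E0 != 0) => /=; rewrite ?addn1 ?addn0 /=;
      [apply: leq_trans sc' _; lia | apply: leq_trans (leq_pred _) _; apply: leq_trans sc' _; lia].
  by rewrite size_mulX.
- have HH : (B + c * E1') * 'X = B' - c * E0%:P.
    apply/eqP; rewrite -subr_eq0; apply/eqP.
    transitivity (- ((B' - B * 'X) - c * (E0%:P + E1' * 'X))); first ring.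
    by rewrite -Esp E2 subrr oppr0.
  case: (eqVneq (B + c * E1') 0) => [->|G0]; first by rewrite size_poly0.
  have : (size ((B + c * E1') * 'X)%R <= b.+1)%N.
    rewrite HH; apply: leq_trans (size_polyD _ _) _; rewrite size_polyN geq_max sB' /=.
    apply: leq_trans (size_polyMleq _ _) _; rewrite size_polyC.
    case: (E0 != 0) => /=; rewrite ?addn1 ?addn0 /=;
      [apply: leq_trans sc _; lia | apply: leq_trans (leq_pred _) _; apply: leq_trans sc _; lia].
  by rewrite size_mulX.
- rewrite fE; ring.
Qed.


Definition pqspan (K : fieldType) (q p : {poly K}) (m : nat) (g : {poly K}) :=
  exists al : nat -> K, g = \sum_(i < m.+1) al i *: (q ^+ (m - i) * p ^+ i).

Lemma pqspan0 (K : fieldType) (q p : {poly K}) m : pqspan q p m 0.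
Proof. by exists (fun=> 0); rewrite big1 // => i _; rewrite scale0r. Qed.

Lemma pqspanD (K : fieldType) (q p : {poly K}) m f g :
  pqspan q p m f -> pqspan q p m g -> pqspan q p m (f + g).
Proof.
case=> al1 ->; case=> al2 ->; exists (fun i => al1 i + al2 i).
by rewrite -big_split /=; apply: eq_bigr => i _; rewrite scalerDl.
Qed.

Lemma pqspanZ (K : fieldType) (q p : {poly K}) m c f :
  pqspan q p m f -> pqspan q p m (c *: f).
Proof.
case=> al ->; exists (fun i => c * al i).
by rewrite scaler_sumr; apply: eq_bigr => i _; rewrite scalerA.
Qed.

Lemma pqspan_sum (K : fieldType) (q p : {poly K}) m n (F : 'I_n -> {poly K}) :
  (forall i, pqspan q p m (F i)) -> pqspan q p m (\sum_(i < n) F i).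
Proof.
move=> H; apply: (big_ind (pqspan q p m)); [exact: pqspan0| exact: pqspanD|].
by move=> i _; apply: H.
Qed.

Lemma pqspanMq (K : fieldType) (q p : {poly K}) m f :
  pqspan q p m f -> pqspan q p m.+1 (q * f).
Proof.
case=> al ->; exists (fun i => if (i <= m)%N then al i else 0).
rewrite [RHS]big_ord_recr /= ltnn scale0r addr0 mulr_sumr.
apply: eq_bigr => i _; rewrite /= -ltnS ltn_ord -scalerAr mulrA -exprS.
by rewrite subSn // -ltnS ltn_ord.
Qed.

Lemma pqspanMp (K : fieldType) (q p : {poly K}) m f :
  pqspan q p m f -> pqspan q p m.+1 (p * f).
Proof.
case=> al ->; exists (fun i => if i is i'.+1 then al i' else 0).
rewrite [RHS]big_ord_recl /= scale0r add0r mulr_sumr.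
apply: eq_bigr => i _; rewrite /bump /= -scalerAr subSS mulrCA -exprS.
by [].
Qed.

Lemma pqspan_all (K : fieldType) (q p : {poly K}) (al be ga de : K) :
  1 = al *: q + be *: p -> 'X = ga *: q + de *: p ->
  forall m (g : {poly K}), (size g <= m.+1)%N -> pqspan q p m g.
Proof.
move=> H1 HX.
have HXj : forall m j, (j <= m)%N -> pqspan q p m 'X^j.
  elim=> [|m IH] j jm.
    move: jm; rewrite leqn0 => /eqP ->; exists (fun=> 1).
    by rewrite big_ord1 /= !expr0 mulr1 scale1r.
  case: (ltngtP j m.+1) jm => // [jm _|-> _].
    rewrite -[X in pqspan _ _ _ X]mulr1 H1 mulrDr.
    apply: pqspanD; rewrite -scalerAr mulrC; apply: pqspanZ.
      by apply: pqspanMq; apply: IH.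
    by apply: pqspanMp; apply: IH.
  rewrite exprSr [X in _ * X]HX mulrDr.
  apply: pqspanD; rewrite -scalerAr mulrC; apply: pqspanZ.
    by apply: pqspanMq; apply: IH.
  by apply: pqspanMp; apply: IH.
move=> m g sg.
have -> : g = \sum_(j < m.+1) g`_j *: 'X^j.
  apply/polyP => i; rewrite coef_sum.
  under eq_bigr do rewrite coefZ coefXn.
  case: (ltnP i m.+1) => im.
    rewrite (bigD1 (Ordinal im)) //= eqxx mulr1 big1 ?addr0 // => j.
    by rewrite -val_eqE /= eq_sym => /negPf ->; rewrite mulr0.
  rewrite big1; last by move=> j _; rewrite (gtn_eqF (leq_trans (ltn_ord j) im)) mulr0.
  by rewrite nth_default // (leq_trans sg im).
by apply: pqspan_sum => j; apply: pqspanZ; apply: HXj; rewrite -ltnS.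
Qed.

Lemma gens_bound (K : fieldType) (k N : nat) (g : nat -> {poly K}) :
  (forall f : {poly K}, (size f <= k.+1)%N ->
     exists al : nat -> K, f = \sum_(i < N) al i *: g i) -> (k.+1 <= N)%N.
Proof.
move=> H.
pose G : 'M[K]_(N, k.+1) := \matrix_(i, j) (g i)`_j.
have : row_full G.
  rewrite -sub1mx; apply/row_subP => j; rewrite row1.
  case: (H 'X^j); first by rewrite size_polyXn.
  move=> al Hal.
  have -> : (delta_mx 0 j : 'rV[K]_(k.+1)) = (\row_i al i) *m G.
    apply/rowP => j'; rewrite !mxE.
    have := congr1 (fun f : {poly K} => f`_j') Hal; rewrite coefXn coef_sum => ->.
    by apply: eq_bigr => i _; rewrite !mxE coefZ.
  exact: submxMl.
rewrite /row_full => /eqP <-; exact: rank_leq_row.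
Qed.

Definition ver (K : fieldType) (k : nat) (s t : K) : 'rV[K]_(k.+1) :=
  \row_(i < k.+1) (s ^+ (k - i) * t ^+ i).

Definition lf (K : fieldType) (k : nat) (w : 'rV[K]_(k.+1)) (f : {poly K}) :=
  \sum_(i < k.+1) w 0 i * f`_i.

Lemma lfD (K : fieldType) k (w : 'rV[K]_(k.+1)) f g : lf w (f + g) = lf w f + lf w g.
Proof. by rewrite /lf -big_split; apply: eq_bigr => i _; rewrite coefD mulrDr. Qed.

Lemma lfZ (K : fieldType) k (w : 'rV[K]_(k.+1)) c f : lf w (c *: f) = c * lf w f.
Proof. by rewrite /lf mulr_sumr; apply: eq_bigr => i _; rewrite coefZ mulrCA. Qed.

Lemma lf0 (K : fieldType) k (w : 'rV[K]_(k.+1)) : lf w 0 = 0.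
Proof. by rewrite /lf big1 // => i _; rewrite coef0 mulr0. Qed.

Lemma lf_sum (K : fieldType) k (w : 'rV[K]_(k.+1)) n (F : 'I_n -> {poly K}) :
  lf w (\sum_(i < n) F i) = \sum_(i < n) lf w (F i).
Proof.
apply: (big_morph (lf w)); [exact: lfD | exact: lf0].
Qed.

Lemma lfXn (K : fieldType) k (w : 'rV[K]_(k.+1)) j :
  (j <= k)%N -> lf w 'X^j = w 0 (inord j).
Proof.
move=> jk; rewrite /lf (bigD1 (inord j)) //= coefXn inordK // eqxx mulr1.
rewrite big1 ?addr0 // => i; rewrite coefXn -val_eqE /= inordK //.
by move/negPf->; rewrite mulr0.
Qed.

Lemma size2E (K : fieldType) (h : {poly K}) :
  (size h <= 2)%N -> h = (h`_0)%:P + h`_1 *: 'X.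
Proof.
move=> sh; apply/polyP => i; rewrite coefD coefC coefZ coefX.
case: i => [|[|i]] /=; rewrite ?mulr0 ?addr0 ?mulr1 ?add0r //.
by rewrite nth_default // (leq_trans sh).
Qed.

Lemma recur (K : fieldType) k (w : 'rV[K]_(k.+1)) (h : {poly K}) :
  (size h <= 2)%N -> h != 0 -> w != 0 ->
  (forall i, (i < k)%N -> lf w (h * 'X^i) = 0) ->
  exists c s t, [/\ c != 0, (s, t) != (0, 0) & w = c *: ver k s t].
Proof.
move=> sh h0 w0 H.
set wi := fun i => w 0 (inord i).
have Hr : forall i, (i < k)%N -> h`_0 * wi i + h`_1 * wi i.+1 = 0.
  move=> i ik; transitivity (lf w (h * 'X^i)); last exact: H.
  rewrite [in RHS](size2E sh) mulrDl mul_polyC -scalerAl.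
  rewrite lfD !lfZ mulrC -exprS !lfXn // ?(ltnW ik) //.
  by rewrite /wi mulrC.
have wE : w = \row_(i < k.+1) wi i.
  by apply/rowP => i; rewrite mxE /wi inord_val.
case: (eqVneq h`_1 0) => [h10|h10].
  have h00 : h`_0 != 0.
    apply: contra h0 => /eqP h00; rewrite (size2E sh) h00 h10 scale0r addr0.
    by [].
  have Hz : forall i, (i < k)%N -> wi i = 0.
    move=> i ik; move: (Hr i ik); rewrite h10 mul0r addr0 => /eqP.
    by rewrite mulf_eq0 (negPf h00) => /eqP.
  exists (wi k), 0, 1; split.
  - apply: contra w0 => /eqP wk0; apply/eqP/rowP => i; rewrite wE !mxE.
    case: (ltnP i k) => ik; first by rewrite Hz.
    have -> : nat_of_ord i = k by apply/eqP; rewrite eqn_leq ik -ltnS ltn_ord.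
    by [].
  - by rewrite xpair_eqE eqxx oner_eq0.
  apply/rowP => i; rewrite wE !mxE expr1n mulr1.
  case: (ltnP i k) => ik.
    by rewrite Hz // expr0n subn_eq0 leqNgt ik mulr0.
  have ik' : nat_of_ord i = k by apply/eqP; rewrite eqn_leq ik -ltnS ltn_ord.
  by rewrite ik' subnn expr0 mulr1.
set x := - h`_0 / h`_1.
have Hx : forall i, (i <= k)%N -> wi i = wi 0%N * x ^+ i.
  elim=> [|i IH] ik; first by rewrite expr0 mulr1.
  have := Hr i ik; rewrite IH; last exact: ltnW.
  move=> HH.
  apply: (@mulfI _ h`_1) => //.
  move/eqP: HH; rewrite addrC addr_eq0 => /eqP ->.
  rewrite /x exprS; field; exact: h10.
exists (wi 0%N), 1, x; split.
- apply: contra w0 => /eqP w00; apply/eqP/rowP => i; rewrite wE !mxE.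
  by rewrite Hx ?w00 ?mul0r // -ltnS.
- by rewrite xpair_eqE oner_eq0.
apply/rowP => i; rewrite wE !mxE expr1n mul1r Hx //.
by rewrite -ltnS.
Qed.


Definition colp (K : fieldType) (k m : nat) (M : 'M[K]_(k.+1, m.+1)) (i : nat) :
  {poly K} := \poly_(r < k.+1) M (inord r) (inord i).

Lemma colp_horner (K : fieldType) k m (M : 'M[K]_(k.+1, m.+1)) x i :
  (ver k 1 x *m M) 0 (inord i) = (colp M i).[x].
Proof.
rewrite mxE /colp horner_poly; apply: eq_bigr => r _.
by rewrite mxE expr1n mul1r mulrC inord_val.
Qed.

Lemma colp_lf (K : fieldType) k m (M : 'M[K]_(k.+1, m.+1)) w i :
  (w *m M) 0 (inord i) = lf w (colp M i).
Proof.
rewrite mxE /lf /colp; apply: eq_bigr => r _.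
by rewrite coef_poly ltn_ord inord_val.
Qed.

Lemma colp_size (K : fieldType) k m (M : 'M[K]_(k.+1, m.+1)) i :
  (size (colp M i) <= k.+1)%N.
Proof. exact: size_poly. Qed.

Lemma span_lemma (K : fieldType) k a b (M1 : 'M[K]_(k.+1, a.+1))
    (M2 : 'M[K]_(k.+1, b.+1)) :
  row_free (row_mx M1 M2) ->
  forall f : {poly K}, (size f <= k.+1)%N -> exists z1 z2 : nat -> K,
    f = \sum_(i < a.+1) z1 i *: colp M1 i + \sum_(j < b.+1) z2 j *: colp M2 j.
Proof.
move=> rf f sf.
have rfT : row_full (row_mx M1 M2)^T.
  by rewrite /row_full mxrank_tr; move: rf; rewrite /row_free.
pose r : 'rV[K]_(k.+1) := \row_(j < k.+1) f`_j.
have /submxP [z Hz] : (r <= (row_mx M1 M2)^T)%MS by apply: submx_full.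
rewrite -[z]hsubmxK tr_row_mx mul_row_col in Hz.
exists (fun n => lsubmx z 0 (inord n)), (fun n => rsubmx z 0 (inord n)).
apply/polyP => j; rewrite coefD !coef_sum.
case: (ltnP j k.+1) => jk.
  have := congr1 (fun v : 'rV[K]_(k.+1) => v 0 (Ordinal jk)) Hz.
  rewrite !mxE /= => ->.
  congr (_ + _); apply: eq_bigr => i _; rewrite coefZ coef_poly jk inord_val !mxE;
    congr (_ * _); congr (_ _ _); apply: val_inj; rewrite /= inordK //.
rewrite nth_default ?(leq_trans sf jk) // big1 ?add0r ?big1 // => i _;
  by rewrite coefZ coef_poly ltnNge jk mulr0.
Qed.

Lemma sum2 (K : fieldType) (al : nat -> K) (g : nat -> {poly K}) :
  \sum_(i < 2) al i *: g i = al 0%N *: g 0%N + al 1%N *: g 1%N.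
Proof. by rewrite big_ord_recr big_ord1. Qed.

Lemma structure (K : closedFieldType) (a b k : nat) (X Y : nat -> {poly K}) :
  (2 <= k)%N ->
  (forall x, exists s t : K, (s, t) != (0, 0) /\
     (forall i, (i < a)%N -> t * (X i).[x] = s * (X i.+1).[x]) /\
     (forall j, (j < b)%N -> t * (Y j).[x] = s * (Y j.+1).[x])) ->
  (forall f : {poly K}, (size f <= k.+1)%N -> exists z1 z2 : nat -> K,
    f = \sum_(i < a.+1) z1 i *: X i + \sum_(j < b.+1) z2 j *: Y j) ->
  exists q p c c' : {poly K}, [/\ coprimep q p, q != 0,
    forall i, (i <= a)%N -> X i = c * q ^+ (a - i) * p ^+ i &
    forall j, (j <= b)%N -> Y j = c' * q ^+ (b - j) * p ^+ j].
Proof.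
move=> k2 hPW hSP.
have [u [v [u0 Huv]]] : exists u v : {poly K}, u != 0 /\ forall x, exists s t : K,
   [/\ (s, t) != (0, 0), t * u.[x] = s * v.[x],
     (forall i, (i < a)%N -> t * (X i).[x] = s * (X i.+1).[x]) &
     (forall j, (j < b)%N -> t * (Y j).[x] = s * (Y j.+1).[x])].
  case: (boolP [exists i : 'I_a, X i != 0]).
    case/existsP => i Xi; exists (X i), (X i.+1); split => // x.
    have [s [t [st [H1 H2]]]] := hPW x; exists s, t; split => //.
    exact: H1 (ltn_ord i).
  move/existsPn => HX.
  case: (boolP [exists j : 'I_b, Y j != 0]).
    case/existsP => j Yj; exists (Y j), (Y j.+1); split => // x.
    have [s [t [st [H1 H2]]]] := hPW x; exists s, t; split => //.
    exact: H2 (ltn_ord j).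
  move/existsPn => HY.
  suff : (k.+1 <= 2)%N by move=> /leq_trans/(_ k2); rewrite ltnn.
  apply: (@gens_bound K k 2 (fun n => if n == 0%N then X a else Y b)) => f sf.
  have [z1 [z2 ->]] := hSP f sf.
  exists (fun n => if n == 0%N then z1 a else z2 b); rewrite [RHS]big_ord_recr big_ord1 /=.
  rewrite big_ord_recr big1; last first.
    by move=> i _; move: (HX i); rewrite negbK => /eqP ->; rewrite scaler0.
  rewrite [X in _ + X]big_ord_recr big1; last first.
    by move=> i _; move: (HY i); rewrite negbK => /eqP ->; rewrite scaler0.
  by rewrite /= !add0r.
have rX : forall i, (i < a)%N -> X i * v = X i.+1 * u.
  move=> i ia; apply: rel2 => x; have [s [t [st H1 H2 _]]] := Huv x.
  by exists s, t; split => //; split => //; apply: H2.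
have rY : forall j, (j < b)%N -> Y j * v = Y j.+1 * u.
  move=> j jb; apply: rel2 => x; have [s [t [st H1 _ H3]]] := Huv x.
  by exists s, t; split => //; split => //; apply: H3.
set g := gcdp u v.
have g0 : g != 0 by rewrite gcdp_eq0 negb_and u0.
set q := u %/ g; set p := v %/ g.
have uE : u = q * g by rewrite divpK // dvdp_gcdl.
have vE : v = p * g by rewrite divpK // dvdp_gcdr.
have cop : coprimep q p by apply: coprimep_div_gcd; rewrite u0.
have q0 : q != 0 by apply: contra u0 => /eqP q0; rewrite uE q0 mul0r.
have rX' : forall i, (i < a)%N -> X i * p = X i.+1 * q.
  move=> i ia; apply: (@mulIf _ g) => //; rewrite -!mulrA -uE -vE; exact: rX.
have rY' : forall j, (j < b)%N -> Y j * p = Y j.+1 * q.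
  move=> j jb; apply: (@mulIf _ g) => //; rewrite -!mulrA -uE -vE; exact: rY.
have [c Hc] := chain cop q0 rX'.
have [c' Hc'] := chain cop q0 rY'.
by exists q, p, c, c'; split.
Qed.

Lemma size_cr (K : fieldType) (c r : {poly K}) n :
  c != 0 -> r != 0 -> size (c * r ^+ n) = (size c + (size r).-1 * n)%N.
Proof.
move=> c0 r0; have rn0 : r ^+ n != 0 by rewrite expf_neq0.
rewrite size_mul // -(size_exp r n).
have : (0 < size (r ^+ n))%N by rewrite size_poly_gt0.
case: (size (r ^+ n)) => // y _.
have : (0 < size c)%N by rewrite size_poly_gt0.
case: (size c) => // x _.
by rewrite addSn addnS.
Qed.

Lemma polyCXn (K : fieldType) (x : K) n : (x%:P) ^+ n = (x ^+ n)%:P.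
Proof. by rewrite rmorphXn. Qed.

Lemma degree (K : fieldType) (a b k : nat) (q p c c' : {poly K}) :
  (1 <= a)%N -> (1 <= b)%N -> (2 <= k)%N -> (k <= a + b)%N -> q != 0 ->
  (size (c * q ^+ a)%R <= k.+1)%N -> (size (c * p ^+ a)%R <= k.+1)%N ->
  (size (c' * q ^+ b)%R <= k.+1)%N -> (size (c' * p ^+ b)%R <= k.+1)%N ->
  (forall f : {poly K}, (size f <= k.+1)%N -> exists z1 z2 : nat -> K,
    f = \sum_(i < a.+1) z1 i *: (c * q ^+ (a - i) * p ^+ i)
      + \sum_(j < b.+1) z2 j *: (c' * q ^+ (b - j) * p ^+ j)) ->
  [/\ (size p <= 2)%N, (size q <= 2)%N & (size p == 2%N) || (size q == 2%N)].
Proof.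
move=> a1 b1 k2 kab q0 s1 s2 s3 s4 SP.
have cc0 : (c != 0) || (c' != 0).
  case: (eqVneq c 0) => [c0|]; last by [].
  case: (eqVneq c' 0) => [c'0|]; last by rewrite orbT.
  case: (SP 1); first by rewrite size_poly1.
  move=> z1 [z2 H].
  move: H; rewrite c0 c'0 big1 ?big1 ?addr0; first by move/eqP; rewrite oner_eq0.
    by move=> j _; rewrite !mul0r scaler0.
  by move=> i _; rewrite !mul0r scaler0.
have big_case : forall r : {poly K}, (3 <= size r)%N ->
    (size (c * r ^+ a)%R <= k.+1)%N -> (size (c' * r ^+ b)%R <= k.+1)%N -> False.
  move=> r r3 sr1 sr2.
  have r0 : r != 0 by rewrite -size_poly_gt0 (leq_trans _ r3).
  have Ha : c != 0 -> (size c + 2 * a <= k.+1)%N.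
    move=> c0; move: sr1; rewrite size_cr //.
    move=> H; apply: leq_trans H; rewrite leq_add2l.
    by apply: leq_mul => //; move: r3; case: (size r).
  have Hb : c' != 0 -> (size c' + 2 * b <= k.+1)%N.
    move=> c0; move: sr2; rewrite size_cr //.
    move=> H; apply: leq_trans H; rewrite leq_add2l.
    by apply: leq_mul => //; move: r3; case: (size r).
  case: (eqVneq c 0) => [c0|c0]; case: (eqVneq c' 0) => [c'0|c'0].
  - by move: cc0; rewrite c0 c'0 eqxx.
  -
    have Hb' := Hb c'0; have sc : (0 < size c')%N by rewrite size_poly_gt0.
    have : (k.+1 <= b.+1)%N.
      apply: (@gens_bound K k b.+1 (fun j => c' * q ^+ (b - j) * p ^+ j)) => f sf.
      have [z1 [z2 ->]] := SP f sf; exists z2.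
      rewrite big1 ?add0r // => i _; by rewrite c0 !mul0r scaler0.
    lia.
  - have Ha' := Ha c0; have sc : (0 < size c)%N by rewrite size_poly_gt0.
    have : (k.+1 <= a.+1)%N.
      apply: (@gens_bound K k a.+1 (fun i => c * q ^+ (a - i) * p ^+ i)) => f sf.
      have [z1 [z2 ->]] := SP f sf; exists z1.
      rewrite [X in _ + X]big1 ?addr0 // => i _; by rewrite c'0 !mul0r scaler0.
    lia.
  - have Ha' := Ha c0; have Hb' := Hb c'0.
    have sc : (0 < size c)%N by rewrite size_poly_gt0.
    have sc' : (0 < size c')%N by rewrite size_poly_gt0.
    have ab : a = b by lia.
    have ka : k = (2 * a)%N by lia.
    have sc1 : (size c <= 1)%N by lia.
    have sc1' : (size c' <= 1)%N by lia.
    rewrite -ab in SP.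
    have : (k.+1 <= a.+1)%N.
      apply: (@gens_bound K k a.+1 (fun i => q ^+ (a - i) * p ^+ i)) => f sf.
      have [z1 [z2 ->]] := SP f sf.
      exists (fun i => z1 i * c`_0 + z2 i * c'`_0).
      rewrite -big_split; apply: eq_bigr => i _ /=.
      rewrite (size1_polyC sc1) (size1_polyC sc1') -!mulrA !mul_polyC !scalerA.
      by rewrite !coefC /= scalerDl.
    lia.
have sp2 : (size p <= 2)%N.
  rewrite leqNgt; apply/negP => sp; exact: big_case sp s2 s4.
have sq2 : (size q <= 2)%N.
  rewrite leqNgt; apply/negP => sq; exact: big_case sq s1 s3.
split => //.
have [sp|sp] := boolP (size p == 2%N); first by [].
have [sq|sq] := boolP (size q == 2%N); first by [].
have {}sp : (size p <= 1)%N by move: sp sp2; case: (size p) => [|[|[|]]].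
have {}sq : (size q <= 1)%N by move: sq sq2; case: (size q) => [|[|[|]]].
have : (k.+1 <= 2)%N; last by lia.
apply: (@gens_bound K k 2 (fun n => if n == 0%N then c else c')) => f sf.
have [z1 [z2 ->]] := SP f sf.
exists (fun n => if n == 0%N then \sum_(i < a.+1) z1 i * (q`_0 ^+ (a - i) * p`_0 ^+ i)
                 else \sum_(j < b.+1) z2 j * (q`_0 ^+ (b - j) * p`_0 ^+ j)).
rewrite [RHS]big_ord_recr big_ord1 /= !scaler_suml.
set p00 := p`_0; set q00 := q`_0.
rewrite (size1_polyC sp) (size1_polyC sq) -/p00 -/q00.
congr (_ + _); apply: eq_bigr => i _; rewrite !polyCXn -mulrA -polyCM mulrC mul_polyC;
  by rewrite scalerA.
Qed.


Lemma indep (K : fieldType) (q p : {poly K}) :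
  q != 0 -> coprimep q p -> (size q <= 2)%N -> (size p <= 2)%N ->
  (size p == 2%N) || (size q == 2%N) ->
  exists al be ga de : K, [/\ 1 = al *: q + be *: p, 'X = ga *: q + de *: p &
    forall s t : K, (s, t) != (0, 0) -> t *: q - s *: p != 0].
Proof.
move=> q0 cop sq sp s2.
set q0' := q`_0; set q1 := q`_1; set p0 := p`_0; set p1 := p`_1.
have qE := size2E sq; have pE := size2E sp.
set det := q0' * p1 - q1 * p0.
have det0 : det != 0.
  apply/eqP => d0.
  case: (eqVneq q1 0) => [q10|q10].
    have p10 : p1 != 0.
      move: s2; case/orP => /eqP H.
        have : lead_coef p != 0 by rewrite lead_coef_eq0 -size_poly_gt0 H.
        by rewrite lead_coefE H.
      have : lead_coef q != 0 by rewrite lead_coef_eq0 -size_poly_gt0 H.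
      by rewrite lead_coefE H -/q1 q10 eqxx.
    have q00 : q0' = 0.
      by apply/eqP; move: d0; rewrite /det q10 mul0r subr0 => /eqP; rewrite mulf_eq0 (negPf p10) orbF.
    by move: q0; rewrite qE -/q0' -/q1 q00 q10 scale0r addr0 eqxx.
  have Hr : root q (- q0' / q1).
    rewrite /root qE hornerD hornerC hornerZ hornerX -/q0' -/q1; apply/eqP; field; exact: q10.
  have := coprimep_root cop Hr.
  rewrite pE hornerD hornerC hornerZ hornerX -/p0 -/p1; apply/negP; rewrite negbK.
  apply/eqP; apply: (@mulfI _ q1) => //.
  rewrite mulr0; move: d0; rewrite /det => d0.
  transitivity (- (q0' * p1 - q1 * p0)); last by rewrite d0 oppr0.
  by field.
exists (p1 / det), (- q1 / det), (- p0 / det), (q0' / det); split.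
- rewrite [in RHS]qE [in RHS]pE; apply/polyP => i.
  rewrite !(coefD, coefZ, coefC, coefX) -/q0' -/q1 -/p0 -/p1.
  case: i => [|[|i]] /=.
  + rewrite !mulr0 !addr0; apply/esym; rewrite /det; field; exact: det0.
  + ring.
  + ring.
- rewrite [in RHS]qE [in RHS]pE; apply/polyP => i.
  rewrite !(coefD, coefZ, coefC, coefX) -/q0' -/q1 -/p0 -/p1.
  case: i => [|[|i]] /=.
  + ring.
  + rewrite /det; field; exact: det0.
  + ring.
move=> s t st; apply/eqP => h0.
have c0 : t * q0' - s * p0 = 0.
  by move: (congr1 (fun f : {poly K} => f`_0) h0); rewrite coefB !coefZ coef0.
have c1 : t * q1 - s * p1 = 0.
  by move: (congr1 (fun f : {poly K} => f`_1) h0); rewrite coefB !coefZ coef0.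
have t0 : t = 0.
  apply: (@mulIf _ det) => //; rewrite mul0r /det.
  transitivity ((t * q0' - s * p0) * p1 - (t * q1 - s * p1) * p0); first ring.
  by rewrite c0 c1 !mul0r subrr.
have s0 : s = 0.
  apply: (@mulIf _ det) => //; rewrite mul0r /det.
  transitivity ((t * q0' - s * p0) * q1 - (t * q1 - s * p1) * q0'); first ring.
  by rewrite c0 c1 !mul0r subrr.
by move: st; rewrite s0 t0 eqxx.
Qed.

Lemma geomrel (K : fieldType) (lam s t : K) a i : (i < a)%N ->
  t * (lam * s ^+ (a - i) * t ^+ i) = s * (lam * s ^+ (a - i.+1) * t ^+ i.+1).
Proof. by move=> ia; rewrite -(subnSK ia) !exprS; ring. Qed.

Lemma szqp (K : fieldType) (q p : {poly K}) m i :
  (size q <= 2)%N -> (size p <= 2)%N -> (size (q ^+ m * p ^+ i)%R <= m + i + 1)%N.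
Proof.
move=> sq sp; apply: leq_trans (size_polyMleq _ _) _.
have h1 := size_poly_exp_leq q m; have h2 := size_poly_exp_leq p i.
have e1 : (((size q).-1 * m).+1 <= m.+1)%N.
  by rewrite ltnS -[X in (_ <= X)%N]mul1n leq_mul2r; move: sq; case: (size q) => [|[|[]]]; rewrite ?orbT.
have e2 : (((size p).-1 * i).+1 <= i.+1)%N.
  by rewrite ltnS -[X in (_ <= X)%N]mul1n leq_mul2r; move: sp; case: (size p) => [|[|[]]]; rewrite ?orbT.
move: (leq_trans h1 e1) (leq_trans h2 e2).
case: (size (q ^+ m)) => [|x]; case: (size (p ^+ i)) => [|y] /=; lia.
Qed.

Lemma size_sumZ (K : fieldType) N n (z : nat -> K) (F : nat -> {poly K}) :
  (forall i, (i < N)%N -> (size (F i) <= n)%N) ->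
  (size (\sum_(i < N) z i *: F i)%R <= n)%N.
Proof.
move=> H; apply: (big_ind (fun g : {poly K} => (size g <= n)%N)).
- by rewrite size_poly0.
- move=> x y hx hy; apply: leq_trans (size_polyD _ _) _; by rewrite geq_max hx hy.
- by move=> i _; apply: leq_trans (size_scale_leq _ _) _; apply: H.
Qed.


Lemma nat_aux (x a k : nat) : (x + 1 * a <= k.+1)%N -> (x <= k - a + 1)%N.
Proof. lia. Qed.

Lemma subpred (m j : nat) : (m.-1 - j = m - j.+1)%N.
Proof. by rewrite -subn1 -subnDA add1n. Qed.

Lemma core (K : closedFieldType) (a b k : nat) (M1 : 'M[K]_(k.+1, a.+1))
    (M2 : 'M[K]_(k.+1, b.+1)) :
  (1 <= a)%N -> (1 <= b)%N -> (2 <= k)%N -> (k <= a + b)%N ->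
  row_free (row_mx M1 M2) ->
  (forall x : K, exists lam mu s t : K, [/\ (s, t) != (0, 0),
     ver k 1 x *m M1 = \row_(i < a.+1) (lam * s ^+ (a - i) * t ^+ i) &
     ver k 1 x *m M2 = \row_(j < b.+1) (mu * s ^+ (b - j) * t ^+ j)]) ->
  forall (w : 'rV[K]_(k.+1)) (lam mu s t : K), w != 0 -> (s, t) != (0, 0) ->
  w *m M1 = \row_(i < a.+1) (lam * s ^+ (a - i) * t ^+ i) ->
  w *m M2 = \row_(j < b.+1) (mu * s ^+ (b - j) * t ^+ j) ->
  exists c s t, [/\ c != 0, (s, t) != (0, 0) & w = c *: ver k s t].
Proof.
move=> a1 b1 k2 kab rf HYp w lam mu s t w0 st Hw1 Hw2.
set X := colp M1; set Y := colp M2.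
have PW : forall x, exists s t : K, (s, t) != (0, 0) /\
     (forall i, (i < a)%N -> t * (X i).[x] = s * (X i.+1).[x]) /\
     (forall j, (j < b)%N -> t * (Y j).[x] = s * (Y j.+1).[x]).
  move=> x; have [l [m [s' [t' [st' H1 H2]]]]] := HYp x.
  exists s', t'; split => //; split.
  - move=> i ia; rewrite /X -!colp_horner H1 !mxE !inordK //; last exact: ltnW.
    exact: geomrel.
  - move=> j jb; rewrite /Y -!colp_horner H2 !mxE !inordK //; last exact: ltnW.
    exact: geomrel.
have SP := span_lemma rf.
have [q [p [c [c' [cop q0 HX HY]]]]] := structure k2 PW SP.
have sX : forall i, (size (X i) <= k.+1)%N by move=> i; exact: colp_size.
have sY : forall i, (size (Y i) <= k.+1)%N by move=> i; exact: colp_size.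
have s1 : (size (c * q ^+ a)%R <= k.+1)%N.
  by have := sX 0%N; rewrite HX // subn0 expr0 mulr1.
have s2 : (size (c * p ^+ a)%R <= k.+1)%N.
  by have := sX a; rewrite HX // subnn expr0 mulr1.
have s3 : (size (c' * q ^+ b)%R <= k.+1)%N.
  by have := sY 0%N; rewrite HY // subn0 expr0 mulr1.
have s4 : (size (c' * p ^+ b)%R <= k.+1)%N.
  by have := sY b; rewrite HY // subnn expr0 mulr1.
have SP' : forall f : {poly K}, (size f <= k.+1)%N -> exists z1 z2 : nat -> K,
    f = \sum_(i < a.+1) z1 i *: (c * q ^+ (a - i) * p ^+ i)
      + \sum_(j < b.+1) z2 j *: (c' * q ^+ (b - j) * p ^+ j).
  move=> f sf; have [z1 [z2 ->]] := SP f sf; exists z1, z2; rewrite -/X -/Y.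
  congr (_ + _); apply: eq_bigr => i _; [rewrite HX | rewrite HY] => //;
    rewrite -ltnS; exact: ltn_ord.
have [sp2 sq2 s22] := degree a1 b1 k2 kab q0 s1 s2 s3 s4 SP'.
have cop' : coprimep c c'.
  apply: Pdiv.ClosedField.root_coprimep => x rc; apply/negP => /eqP rc'.
  case: (SP' 1); first by rewrite size_poly1.
  move=> z1 [z2 H]; move: (congr1 (fun f : {poly K} => f.[x]) H).
  rewrite hornerC hornerD !horner_sum big1 ?big1 ?addr0.
  - by move/eqP; rewrite oner_eq0.
  - by move=> j _; rewrite hornerZ !hornerM rc' !mul0r mulr0.
  - by move=> i _; rewrite hornerZ !hornerM (eqP rc) !mul0r mulr0.
have sc : (size c <= k - a + 1)%N.
  case: (eqVneq c 0) => [->|c0]; first by rewrite size_poly0.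
  case/orP: s22 => /eqP H.
    move: s2; rewrite size_cr // ?H; last by rewrite -size_poly_gt0 H.
    by move=> /= h; apply: nat_aux h.
  move: s1; rewrite size_cr // ?H //.
  by move=> /= h; apply: nat_aux h.
have sc' : (size c' <= k - b + 1)%N.
  case: (eqVneq c' 0) => [->|c0]; first by rewrite size_poly0.
  case/orP: s22 => /eqP H.
    move: s4; rewrite size_cr // ?H; last by rewrite -size_poly_gt0 H.
    by move=> /= h; apply: nat_aux h.
  move: s3; rewrite size_cr // ?H //.
  by move=> /= h; apply: nat_aux h.
have surj : forall f : {poly K}, (size f <= k.+1)%N -> exists A B : {poly K},
    [/\ (size A <= a.+1)%N, (size B <= b.+1)%N & f = c * A + c' * B].
  move=> f sf; have [z1 [z2 ->]] := SP' f sf.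
  exists (\sum_(i < a.+1) z1 i *: (q ^+ (a - i) * p ^+ i)),
         (\sum_(j < b.+1) z2 j *: (q ^+ (b - j) * p ^+ j)); split.
  - apply: (@size_sumZ K a.+1 a.+1 z1 (fun i => q ^+ (a - i) * p ^+ i)) => i ia.
    apply: leq_trans (szqp _ _ sq2 sp2) _.
    by rewrite subnK ?addn1 // -ltnS.
  - apply: (@size_sumZ K b.+1 b.+1 z2 (fun i => q ^+ (b - i) * p ^+ i)) => i ia.
    apply: leq_trans (szqp _ _ sq2 sp2) _.
    by rewrite subnK ?addn1 // -ltnS.
  - rewrite !mulr_sumr; congr (_ + _); apply: eq_bigr => i _;
      by rewrite -scalerAr mulrA.
have desc := descent kab cop' sc sc' surj.
have [al [be [ga [de [H1 HXe hnz]]]]] := indep q0 cop sq2 sp2 s22.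
set h := t *: q - s *: p.
have h0 : h != 0 by apply: hnz.
have sh : (size h <= 2)%N.
  apply: leq_trans (size_polyD _ _) _; rewrite size_polyN geq_max.
  by rewrite !(leq_trans (size_scale_leq _ _)).
have lfX : forall i, (i <= a)%N -> lf w (X i) = lam * s ^+ (a - i) * t ^+ i.
  by move=> i ia; rewrite /X -colp_lf Hw1 mxE inordK.
have lfY : forall j, (j <= b)%N -> lf w (Y j) = mu * s ^+ (b - j) * t ^+ j.
  by move=> j jb; rewrite /Y -colp_lf Hw2 mxE inordK.
have key1 : forall i, (i < a)%N -> lf w (h * (c * q ^+ (a - i.+1) * p ^+ i)) = 0.
  move=> i ia.
  have -> : h * (c * q ^+ (a - i.+1) * p ^+ i) = t *: X i + (- s) *: X i.+1.
    rewrite HX ?(ltnW ia) // HX // -(subnSK ia) !exprS /h -!mul_polyC polyCN.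
    ring.
  rewrite lfD !lfZ lfX ?(ltnW ia) // lfX // geomrel //.
  by rewrite mulNr addrN.
have key2 : forall j, (j < b)%N -> lf w (h * (c' * q ^+ (b - j.+1) * p ^+ j)) = 0.
  move=> j jb.
  have -> : h * (c' * q ^+ (b - j.+1) * p ^+ j) = t *: Y j + (- s) *: Y j.+1.
    rewrite HY ?(ltnW jb) // HY // -(subnSK jb) !exprS /h -!mul_polyC polyCN.
    ring.
  rewrite lfD !lfZ lfY ?(ltnW jb) // lfY // geomrel //.
  by rewrite mulNr addrN.
apply: (recur sh h0 w0) => i ik.
case: (desc 'X^i); first by rewrite size_polyXn.
move=> A [B [sA sB ->]].
have [alA ->] : pqspan q p a.-1 A by apply: (pqspan_all H1 HXe); rewrite prednK.
have [alB ->] : pqspan q p b.-1 B by apply: (pqspan_all H1 HXe); rewrite prednK.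
rewrite mulrDr lfD !mulr_sumr !lf_sum !big1 ?addr0 //.
- move=> j _; rewrite -scalerAr -scalerAr lfZ [c' * _]mulrA.
  have jb : (j < b)%N by apply: leq_trans (ltn_ord j) _; rewrite prednK.
  rewrite subpred.
  by rewrite key2 // mulr0.
- move=> j _; rewrite -scalerAr -scalerAr lfZ [c * _]mulrA.
  have ja : (j < a)%N by apply: leq_trans (ltn_ord j) _; rewrite prednK.
  rewrite subpred.
  by rewrite key1 // mulr0.
Qed.


Lemma MleA (K : closedFieldType) k n p (M : 'M[K]_(k.+1, n.+1)) (A : 'M[K]_(p, n.+1)) :
  (forall x, (ver k 1 x *m M <= A)%MS) -> (M <= A)%MS.
Proof.
move=> H; rewrite submxE; apply/eqP/matrixP => r j; rewrite [RHS]mxE.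
set C := M *m cokermx A.
have P0 : colp C j = 0.
  apply: poly_zero_all => x; rewrite -colp_horner /C mulmxA.
  by move: (H x); rewrite submxE => /eqP ->; rewrite mxE.
have := congr1 (fun f : {poly K} => f`_r) P0.
by rewrite coef0 /colp coef_poly ltn_ord !inord_val.
Qed.

Theorem lemma2p11 (K : closedFieldType) (Kchar0 : [pchar K] =i pred0)
  (n k : nat) (W Y : 'rV[K]_(n.+1) -> Prop)
  (HW : smooth_rn_surface_scroll W)
  (HY : rational_normal_curve k Y)
  (Hk : (2 <= k <= n.-1)%N)
  (YW : forall v, Y v -> W v)
  (A : 'M[K]_(k.+1, n.+1)) (HA : row_free A)
  (YL : forall v, Y v -> lin_span_pts A v) :
  forall v : 'rV[K]_(n.+1), v != 0 -> (Y v <-> (W v /\ lin_span_pts A v)).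
Proof.
move=> v v0; split; first by move=> Yv; split; [exact: YW | exact: YL].
case=> Wv Lv.
case: HY => M [rfM HYiff].
have YM : forall x, Y (ver k 1 x *m M).
  move=> x; apply/HYiff; exists 1, 1, x; split => //.
  - by rewrite oner_eq0.
  - by rewrite xpair_eqE oner_eq0.
  - by rewrite scale1r.
have MA : (M <= A)%MS by apply: MleA => x; apply: YL; apply: YM.
have AM : (A <= M)%MS.
  rewrite -(mxrank_leqif_sup MA).2.
  by move: rfM HA; rewrite /row_free => /eqP -> /eqP ->.
have /submxP [w vE] : (v <= M)%MS by apply: submx_trans AM.
have w0 : w != 0 by apply: contra v0 => /eqP w0; rewrite vE w0 mul0mx.
case: HW => a [b [e [g [a1 b1 gu HWiff]]]].
have en : n.+1 = (a + b.+1).+1 by rewrite -e.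
case: en => en.
subst n.
have kab : (k <= a + b)%N by move: Hk; rewrite addnS /= => /andP [].
have k2 : (2 <= k)%N by move: Hk => /andP [].
have ee : e = erefl by apply: eq_irrelevance.
subst e.
pose M' : 'M[K]_(k.+1, a.+1 + b.+1) := M *m invmx g.
have rf' : row_free (row_mx (lsubmx M') (rsubmx M')).
  by rewrite hsubmxK /M' /row_free mxrankMfree ?row_free_unit ?unitmx_inv.
have Wext : forall u : 'rV[K]_(k.+1), W (u *m M) -> exists lam mu s t : K,
    [/\ (s, t) != (0, 0),
     u *m lsubmx M' = \row_(i < a.+1) (lam * s ^+ (a - i) * t ^+ i) &
     u *m rsubmx M' = \row_(j < b.+1) (mu * s ^+ (b - j) * t ^+ j)].
  move=> u /HWiff [w1 [[s [t [lam [mu [st [lm ->]]]]]] Hu]].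
  exists lam, mu, s, t; split => //.
  - have : u *m M' = row_mx (\row_(i < a.+1) (lam * s ^+ (a - i) * t ^+ i))
                             (\row_(j < b.+1) (mu * s ^+ (b - j) * t ^+ j)).
      by rewrite /M' mulmxA Hu castmx_id mulmxK.
    by rewrite -{1}[M']hsubmxK mul_mx_row => /eq_row_mx [H _].
  - have : u *m M' = row_mx (\row_(i < a.+1) (lam * s ^+ (a - i) * t ^+ i))
                             (\row_(j < b.+1) (mu * s ^+ (b - j) * t ^+ j)).
      by rewrite /M' mulmxA Hu castmx_id mulmxK.
    by rewrite -{1}[M']hsubmxK mul_mx_row => /eq_row_mx [_ H].
have HYp : forall x : K, exists lam mu s t : K, [/\ (s, t) != (0, 0),
     ver k 1 x *m lsubmx M' = \row_(i < a.+1) (lam * s ^+ (a - i) * t ^+ i) &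
     ver k 1 x *m rsubmx M' = \row_(j < b.+1) (mu * s ^+ (b - j) * t ^+ j)].
  by move=> x; apply: Wext; apply: YW; apply: YM.
have [lam [mu [s [t [st Hw1 Hw2]]]]] : exists lam mu s t : K, [/\ (s, t) != (0, 0),
     w *m lsubmx M' = \row_(i < a.+1) (lam * s ^+ (a - i) * t ^+ i) &
     w *m rsubmx M' = \row_(j < b.+1) (mu * s ^+ (b - j) * t ^+ j)].
  by apply: Wext; rewrite -vE.
have [c [s' [t' [c0 st' wE]]]] := core a1 b1 k2 kab rf' HYp w0 st Hw1 Hw2.
apply/HYiff; exists c, s', t'; split => //.
by rewrite vE wE -scalemxAl.
Qed.
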